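(* Let $[\cdot]_{\mathbb{R}}:\mathbb{C}^d\to\mathbb{R}^{2d}$ be the map $v\mapsto\begin{pmatrix}\operatorname{Re}v\\ \operatorname{Im}v\end{pmatrix}$. Let $v_1,\dots,v_n\in\mathbb{C}^d$. (1) If $([v_1]_{\mathbb{R}},\dots,[v_n]_{\mathbb{R}})$ is a tight frame for $\mathbb{R}^{2d}$, then $(v_1,\dots,v_n)$ is a tight frame for $\mathbb{C}^d$. (2) If $(v_1,\dots,v_n)$ is a tight frame for $\mathbb{C}^d$, then $([v_j]_{\mathbb{R}})_{j=1}^n$ is a tight frame for $\mathbb{R}^{2d}$ if and only if $$\sum_j\sum_k\langle v_j,v_k\rangle^2=0,$$ equivalently, if and only if $\sum_j\sum_k(\operatorname{Re}\langle v_j,v_k\rangle)^2=\sum_j\sum_k(\operatorname{Im}\langle v_j,v_k\rangle)^2$.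
   Context: $\operatorname{Re}v,\operatorname{Im}v\in\mathbb{R}^d$ are the entrywise real and imaginary parts of $v\in\mathbb{C}^d$. Inner products are Euclidean: $\langle v,w\rangle=\sum_j\overline{w_j}v_j$. A sequence $(u_j)$ in $\mathbb{F}^D$ is a tight frame for $\mathbb{F}^D$ if there is $A>0$ with $A\|u\|^2=\sum_j|\langle u,u_j\rangle|^2$ for all $u\in\mathbb{F}^D$. *)

(* Defs.v *)
From HB Require Import structures.
From mathcomp Require Import all_boot all_order all_algebra.
From mathcomp Require Import complex.
Set Implicit Arguments. Unset Strict Implicit. Unset Printing Implicit Defensive.
Import Order.TTheory GRing.Theory Num.Theory.
Local Open Scope ring_scope.

Definition rinner (R : rcfType) (D : nat) (u w : 'cV[R]_D) : R :=
  \sum_(i < D) u i 0 * w i 0.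

Definition cinner (R : rcfType) (d : nat) (v w : 'cV[R[i]]_d) : R[i] :=
  \sum_(i < d) (w i 0)^* * v i 0.

Definition rtight_frame (R : rcfType) (D n : nat) (u : 'I_n -> 'cV[R]_D) : Prop :=
  exists A : R, 0 < A /\
    forall x : 'cV[R]_D,
      A * (\sum_(i < D) `|x i 0| ^+ 2) = \sum_(j < n) `|rinner x (u j)| ^+ 2.

Definition ctight_frame (R : rcfType) (d n : nat) (v : 'I_n -> 'cV[R[i]]_d) : Prop :=
  exists A : R, 0 < A /\
    forall x : 'cV[R[i]]_d,
      (A%:C)%C * (\sum_(i < d) `|x i 0| ^+ 2) = \sum_(j < n) `|cinner x (v j)| ^+ 2.

Definition realify (R : rcfType) (d : nat) (v : 'cV[R[i]]_d) : 'cV[R]_(d + d) :=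
  col_mx (map_mx (@complex.Re R) v) (map_mx (@complex.Im R) v).

(* Main.v *)
Require Import Defs.
From HB Require Import structures.
From mathcomp Require Import all_boot all_order all_algebra.
From mathcomp Require Import complex ring lra.
Import Order.TTheory GRing.Theory Num.Theory.
Local Open Scope ring_scope.
Set Implicit Arguments. Unset Strict Implicit. Unset Printing Implicit Defensive.

Section Aux.
Variable R : rcfType.
Local Notation C := R[i].
Local Notation Re := (@complex.Re R).
Local Notation Im := (@complex.Im R).

Lemma ReD (x y : C) : Re (x + y) = Re x + Re y. Proof. by case: x; case: y. Qed.
Lemma ImD (x y : C) : Im (x + y) = Im x + Im y. Proof. by case: x; case: y. Qed.
Lemma Re_sum I (r : seq I) (P : pred I) (F : I -> C) :
  Re (\sum_(i <- r | P i) F i) = \sum_(i <- r | P i) Re (F i).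
Proof. exact: (big_morph _ ReD (erefl _)). Qed.
Lemma Im_sum I (r : seq I) (P : pred I) (F : I -> C) :
  Im (\sum_(i <- r | P i) F i) = \sum_(i <- r | P i) Im (F i).
Proof. exact: (big_morph _ ImD (erefl _)). Qed.
Lemma ReM (x y : C) : Re (x*y) = Re x * Re y - Im x * Im y.
Proof. by case: x => a b; case: y => c e. Qed.
Lemma ImM (x y : C) : Im (x*y) = Re x * Im y + Im x * Re y.
Proof. by case: x => a b; case: y => c e. Qed.
Lemma ReJ (x : C) : Re (x^*)%C = Re x. Proof. by case: x. Qed.
Lemma ImJ (x : C) : Im (x^*)%C = - Im x. Proof. by case: x. Qed.
Lemma Re_i (x : C) : Re ('i%C * x) = - Im x.
Proof. rewrite ReM /=; ring. Qed.
Lemma Im_i (x : C) : Im ('i%C * x) = Re x.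
Proof. rewrite ImM /=; ring. Qed.
Lemma normsq (z : C) : `|z| ^+ 2 = ((Re z) ^+ 2 + (Im z) ^+ 2)%:C%C.
Proof. by rewrite add_Re2_Im2. Qed.
Lemma mulcJ (z : C) : z * (z^*)%C = ((Re z) ^+ 2 + (Im z) ^+ 2)%:C%C.
Proof. apply/eqP; rewrite eq_complex ReM ImM ReJ ImJ /=; apply/andP; split; apply/eqP; ring. Qed.
Lemma conjcM (a b : C) : ((a * b)^*)%C = (a^*)%C * (b^*)%C.
Proof. apply/eqP; rewrite eq_complex ReJ ImJ !ReM !ImM !ReJ !ImJ; apply/andP; split; apply/eqP; ring. Qed.
Lemma Im0_real (z : C) : Im z = 0 -> z = (Re z)%:C%C.
Proof. by case: z => a b /= ->. Qed.

Lemma Im_conj_sq (a : C) : Im (((a^*)%C) ^+ 2) = - Im (a ^+ 2).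
Proof. rewrite !expr2 !ImM ReJ ImJ; ring. Qed.
Lemma sum_swap3 m p q (F : 'I_m -> 'I_p -> 'I_q -> C) :
  \sum_(i < m) \sum_(j < p) \sum_(k < q) F i j k =
  \sum_(j < p) \sum_(k < q) \sum_(i < m) F i j k.
Proof. rewrite exchange_big; apply: eq_bigr => j _; exact: exchange_big. Qed.
Lemma antisym m (F : 'I_m -> 'I_m -> R) : (forall j k, F k j = - F j k) ->
  \sum_(j < m) \sum_(k < m) F j k = 0.
Proof.
move=> HF; have : \sum_(j < m) \sum_(k < m) F j k = - \sum_(j < m) \sum_(k < m) F j k.
  rewrite {1}exchange_big -sumrN; apply: eq_bigr => j _; rewrite -sumrN.
  by apply: eq_bigr => k _; exact: HF.
move=> h; lra.
Qed.

Variable d : nat.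
Definition nx (x : 'cV[C]_d) : R := \sum_(i < d) (Re (x i 0) ^+ 2 + Im (x i 0) ^+ 2).

Lemma cnorm_nx (x : 'cV[C]_d) : \sum_(i < d) `|x i 0| ^+ 2 = (nx x)%:C%C.
Proof. rewrite /nx raddf_sum; apply: eq_bigr => i _; exact: normsq. Qed.

Lemma Re_cinner (x w : 'cV[C]_d) : Re (cinner x w) =
  \sum_(i < d) (Re (x i 0) * Re (w i 0) + Im (x i 0) * Im (w i 0)).
Proof. rewrite /cinner Re_sum; apply: eq_bigr => i _; rewrite ReM ReJ ImJ; ring. Qed.

Lemma rinner_realify (x w : 'cV[C]_d) : rinner (realify x) (realify w) = Re (cinner x w).
Proof.
rewrite /rinner big_split_ord /= Re_cinner -big_split; apply: eq_bigr => i _.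
by rewrite /realify !col_mxEu !col_mxEd !mxE.
Qed.

Lemma realify_norm (x : 'cV[C]_d) : \sum_(i < d + d) `|realify x i 0| ^+ 2 = nx x.
Proof.
rewrite big_split_ord /= /nx -big_split; apply: eq_bigr => i _.
by rewrite /realify !col_mxEu !col_mxEd !mxE !real_normK ?num_real.
Qed.

Lemma realify_surj (y : 'cV[R]_(d + d)) : exists x, y = realify x.
Proof.
exists (\col_i (Complex (usubmx y i 0) (dsubmx y i 0))).
rewrite -[y in LHS]vsubmxK /realify; congr col_mx; apply/matrixP => i j;
  by rewrite !mxE (ord1 j).
Qed.

Definition ix (x : 'cV[C]_d) : 'cV[C]_d := map_mx (fun z => 'i%C * z) x.
Lemma cinner_ix (x w : 'cV[C]_d) : cinner (ix x) w = 'i%C * cinner x w.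
Proof. rewrite /cinner mulr_sumr; apply: eq_bigr => i _; by rewrite mxE mulrCA. Qed.
Lemma nx_ix (x : 'cV[C]_d) : nx (ix x) = nx x.
Proof. apply: eq_bigr => i _; rewrite mxE Re_i Im_i sqrrN addrC //. Qed.

Lemma cinner_conj (x w : 'cV[C]_d) : cinner w x = ((cinner x w)^*)%C.
Proof.
rewrite /cinner raddf_sum; apply: eq_bigr => i _.
rewrite /= conjcM conjcK mulrC //.
Qed.

Variable n : nat.
Lemma rtight_iff (u : 'I_n -> 'cV[C]_d) :
  rtight_frame (fun j => realify (u j)) <->
  exists B : R, 0 < B /\ forall x, B * nx x = \sum_(j < n) Re (cinner x (u j)) ^+ 2.
Proof.
split; case=> B [B0 H]; exists B; split => // x.
  have := H (realify x); rewrite realify_norm => ->.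
  by apply: eq_bigr => j _; rewrite rinner_realify real_normK ?num_real.
case: (realify_surj x) => z ->; rewrite realify_norm H.
by apply: eq_bigr => j _; rewrite rinner_realify real_normK ?num_real.
Qed.

Lemma ctight_iff (u : 'I_n -> 'cV[C]_d) :
  ctight_frame u <->
  exists A : R, 0 < A /\ forall x, A * nx x =
     \sum_(j < n) (Re (cinner x (u j)) ^+ 2 + Im (cinner x (u j)) ^+ 2).
Proof.
have E : forall x, \sum_(j < n) `|cinner x (u j)| ^+ 2 =
   (\sum_(j < n) (Re (cinner x (u j)) ^+ 2 + Im (cinner x (u j)) ^+ 2))%:C%C.
  by move=> x; rewrite raddf_sum; apply: eq_bigr => j _; exact: normsq.
split; case=> A [A0 H]; exists A; split => // x.
  by have := H x; rewrite cnorm_nx E -rmorphM => /complexI.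
by rewrite cnorm_nx E -rmorphM H.
Qed.
End Aux.
Unset Implicit Arguments.

Theorem theorem8 (R : rcfType) (d n : nat) (v : 'I_n -> 'cV[R[i]]_d) :
  (rtight_frame (fun j => realify (v j)) -> ctight_frame v) /\
  (ctight_frame v ->
     (rtight_frame (fun j => realify (v j)) <->
        \sum_(j < n) \sum_(k < n) (cinner (v j) (v k)) ^+ 2 = 0) /\
     (rtight_frame (fun j => realify (v j)) <->
        \sum_(j < n) \sum_(k < n) (complex.Re (cinner (v j) (v k))) ^+ 2 =
        \sum_(j < n) \sum_(k < n) (complex.Im (cinner (v j) (v k))) ^+ 2)).
Proof.
have Hri : rtight_frame (fun j => realify (v j)) -> exists B : R, 0 < B /\
   forall x, B * nx x = \sum_(j < n) complex.Re (cinner x (v j)) ^+ 2 /\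
             B * nx x = \sum_(j < n) complex.Im (cinner x (v j)) ^+ 2.
  move/rtight_iff => [B [B0 H]]; exists B; split => // x; split => //.
  have := H (ix x); rewrite nx_ix => ->.
  by apply: eq_bigr => j _; rewrite cinner_ix Re_i sqrrN.
split.
  move/Hri => [B [B0 H]]; apply/ctight_iff; exists (B + B); split.
    by rewrite addr_gt0.
  move=> x; case: (H x) => H1 H2; rewrite big_split /= -H1 -H2; ring.
move/ctight_iff => [A [A0 HA]].
set S := \sum_(j < n) \sum_(k < n) (cinner (v j) (v k)) ^+ 2.
set T := \sum_(j < n) \sum_(k < n) (complex.Re (cinner (v j) (v k))) ^+ 2.
set U := \sum_(j < n) \sum_(k < n) (complex.Im (cinner (v j) (v k))) ^+ 2.
have SE : S = ((T - U)%:C)%C.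
  have hIm : complex.Im S = 0.
    rewrite /S Im_sum; under eq_bigr do rewrite Im_sum.
    apply: (@antisym R n (fun j k => complex.Im (cinner (v j) (v k) ^+ 2))) => j k.
    by rewrite (cinner_conj (v k) (v j)) Im_conj_sq opprK.
  rewrite (Im0_real hIm).
  congr (_ %:C)%C; rewrite /S /T /U Re_sum -sumrB; apply: eq_bigr => j _.
  rewrite Re_sum -sumrB; apply: eq_bigr => k _; rewrite !expr2 ReM //.
have TU : T = U <-> S = 0.
  rewrite SE; split => [->|]; first by rewrite subrr.
  by move/complexI/eqP; rewrite subr_eq0 => /eqP.
have rT : rtight_frame (fun j => realify (v j)) -> T = U.
  move/Hri => [B [B0 H]]; apply: eq_bigr => j _.
  by case: (H (v j)) => <- <-.
have Sr : S = 0 -> rtight_frame (fun j => realify (v j)).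
  move=> S0.
  pose N a b := \sum_(j < n) v j a 0 * v j b 0.
  have SN : S = \sum_(a < d) \sum_(b < d) N a b * ((N a b)^*)%C.
    rewrite /S /cinner.
    under eq_bigr => j _ do under eq_bigr => k _ do rewrite expr2 big_distrlr /=.
    under eq_bigr => j _ do rewrite sum_swap3.
    rewrite sum_swap3; apply: eq_bigr => a _; apply: eq_bigr => b _.
    rewrite /N raddf_sum big_distrlr /=; apply: eq_bigr => j _; apply: eq_bigr => k _.
    rewrite conjcM; ring.
  have N0 : forall a b, N a b = 0.
    have : \sum_(a < d) \sum_(b < d) ((complex.Re (N a b)) ^+ 2 + (complex.Im (N a b)) ^+ 2) = 0.
      apply: (@complexI R); rewrite raddf_sum /=.
      transitivity S; last by rewrite S0.
      rewrite SN; apply: eq_bigr => a _; rewrite raddf_sum; apply: eq_bigr => b _.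
      by rewrite mulcJ.
    move=> H a b.
    have H1 : \sum_(b < d) ((complex.Re (N a b)) ^+ 2 + (complex.Im (N a b)) ^+ 2) = 0.
      apply: (psumr_eq0P _ H) => // i _.
      by apply: sumr_ge0 => j _; rewrite addr_ge0 ?sqr_ge0.
    have : (complex.Re (N a b)) ^+ 2 + (complex.Im (N a b)) ^+ 2 = 0.
      apply: (psumr_eq0P _ H1) => // j _.
      by rewrite addr_ge0 ?sqr_ge0.
    move/eqP; rewrite paddr_eq0 ?sqr_ge0 // !sqrf_eq0 => /andP[h1 h2].
    by apply/eqP; rewrite eq_complex h1 h2.
  have Q0 : forall x, \sum_(j < n) (cinner x (v j)) ^+ 2 = 0.
    move=> x; rewrite /cinner.
    under eq_bigr do rewrite expr2 big_distrlr /=.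
    rewrite sum_swap3; apply: big1 => a _; apply: big1 => b _.
    transitivity (x a 0 * x b 0 * ((N a b)^*)%C).
      rewrite /N raddf_sum mulr_sumr; apply: eq_bigr => j _; rewrite /= conjcM; ring.
    by rewrite N0 conjc0 mulr0.
  apply/rtight_iff; exists (A / 2); split; first by rewrite divr_gt0.
  move=> x; have := HA x; have := congr1 (@complex.Re R) (Q0 x).
  rewrite Re_sum /=.
  under eq_bigr do rewrite expr2 ReM -!expr2.
  rewrite sumrB big_split /=.
  move=> h1 h2; lra.
split; split.
- by move/rT/TU.
- exact: Sr.
- exact: rT.
- by move/TU/Sr.
Qed.
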